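(* Let $\{s_n\}$, $\{t_n\}$ be sequences of positive reals with $s_n\ge t_n\ge2$ and $s_{n+1}\ge s_n+t_n$ for all $n\ge1$. For $n\ge1$ let $\mathcal{D}_n$ be the set of $(\sigma_1,\dots,\sigma_n)\in\mathbb{N}^n$ with $s_k<\sigma_k\le s_k+t_k$ for all $1\le k\le n$, and for $(\sigma_1,\dots,\sigma_n)\in\mathcal{D}_n$ let \[ J_n(\sigma_1,\dots,\sigma_n):=\bigcup_{j\in\mathbb{N},\ s_{n+1}<j\le s_{n+1}+t_{n+1}} \overline{I_{n+1}(\sigma_1,\dots,\sigma_n,j)}. \] Then for any two distinct $(\sigma_1,\dots,\sigma_n),(\sigma'_1,\dots,\sigma'_n)\in\mathcal{D}_n$, the intervals $J_n(\sigma_1,\dots,\sigma_n)$ and $J_n(\sigma'_1,\dots,\sigma'_n)$ are disjoint and separated by a gap of length at least \[ \varepsilon_n:=\frac{1}{2^{n+3}}\cdot\frac{1}{s_1\cdots s_n\, s_n}. \]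
   Context: Engel expansion: define $T:[0,1)\to[0,1)$ by $T(0)=0$ and $T(x)=x\lceil 1/x\rceil-1$ for $x\in(0,1)$. For irrational $x\in(0,1)$ set $d_1(x)=\lceil 1/x\rceil$ and $d_{n+1}(x)=d_1(T^n(x))$. For integers $2\le\sigma_1\le\cdots\le\sigma_m$, the cylinder $I_m(\sigma_1,\dots,\sigma_m)$ is the set of $x\in(0,1)$ with $d_k(x)=\sigma_k$ for $1\le k\le m$; it is the interval $[A_m,B_m)$ with $A_m=\sum_{k=1}^{m}\frac{1}{\sigma_1\cdots\sigma_k}$ and $B_m=\sum_{k=1}^{m-1}\frac{1}{\sigma_1\cdots\sigma_k}+\frac{1}{\sigma_1\cdots\sigma_{m-1}(\sigma_m-1)}$, of length $\frac{1}{\sigma_1\cdots\sigma_m(\sigma_m-1)}$. $\overline{A}$ denotes closure. *)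

(* Defs.v *)
From Stdlib Require Import Reals Lra Lia Arith.
From Stdlib Require Export Rtopology.
Open Scope R_scope.

(* Digit sequences are functions nat -> nat, used on indices 1..m. *)

Fixpoint prod_digits (sigma : nat -> nat) (k : nat) : R :=
  match k with
  | O => 1
  | S k' => prod_digits sigma k' * INR (sigma (S k'))
  end.

Fixpoint partial_sum (sigma : nat -> nat) (m : nat) : R :=
  match m with
  | O => 0
  | S m' => partial_sum sigma m' + / prod_digits sigma (S m')
  end.

(* Endpoints of the Engel cylinder I_m(sigma_1,...,sigma_m) = [A_m, B_m). *)
Definition cyl_A (sigma : nat -> nat) (m : nat) : R := partial_sum sigma m.
Definition cyl_B (sigma : nat -> nat) (m : nat) : R :=
  partial_sum sigma (m - 1) +
  / (prod_digits sigma (m - 1) * (INR (sigma m) - 1)).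

Definition cylinder (sigma : nat -> nat) (m : nat) : R -> Prop :=
  fun x => cyl_A sigma m <= x < cyl_B sigma m.

Definition extend_digits (sigma : nat -> nat) (n j : nat) : nat -> nat :=
  fun k => if Nat.eqb k (S n) then j else sigma k.

Definition in_D (s t : nat -> R) (n : nat) (sigma : nat -> nat) : Prop :=
  forall k, (1 <= k <= n)%nat -> s k < INR (sigma k) <= s k + t k.

Definition J_set (s t : nat -> R) (n : nat) (sigma : nat -> nat) : R -> Prop :=
  fun x => exists j : nat,
    s (S n) < INR j <= s (S n) + t (S n) /\
    adherence (cylinder (extend_digits sigma n j) (S n)) x.

Fixpoint prod_seq (s : nat -> R) (n : nat) : R :=
  match n with
  | O => 1
  | S n' => prod_seq s n' * s (S n')
  end.

Definition eps_n (s : nat -> R) (n : nat) : R :=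
  / 2 ^ (n + 3) * / (prod_seq s n * s n).

(* Main.v *)
Require Import Defs.
From Stdlib Require Import Reals Lra Lia Psatz Rtopology.
Open Scope R_scope.

Lemma adh_bounds (A B x : R) :
  adherence (fun z => A <= z < B) x -> A <= x <= B.
Proof.
  intro H. split.
  - destruct (Rle_or_lt A x) as [h|h]; [exact h|].
    assert (hp : 0 < A - x) by lra.
    destruct (H (disc x (mkposreal _ hp))) as [y [Hy1 Hy2]].
    + exists (mkposreal _ hp). intros z hz; exact hz.
    + unfold disc in Hy1; simpl in Hy1. apply Rabs_def2 in Hy1. lra.
  - destruct (Rle_or_lt x B) as [h|h]; [exact h|].
    assert (hp : 0 < x - B) by lra.
    destruct (H (disc x (mkposreal _ hp))) as [y [Hy1 Hy2]].
    + exists (mkposreal _ hp). intros z hz; exact hz.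
    + unfold disc in Hy1; simpl in Hy1. apply Rabs_def2 in Hy1. lra.
Qed.

Lemma gap_ineq a b c d S : 2 < a -> a <= b - 1 -> 0 < S -> 0 < c -> c <= 2*S ->
  b <= d -> S - 1 < d -> b <= S ->
  / (4*b*b) <= /a - /b + /(a*c) - /(b*d).
Proof.
  intros.
  assert (h1 : /(b-1) <= /a) by (apply Rinv_le_contravar; lra).
  assert (h2 : /(b*(2*S)) <= /(a*c)).
  { apply Rinv_le_contravar. nra. apply Rmult_le_compat; lra. }
  assert (e1 : /(b-1) - /b = /(b*(b-1))) by (field; repeat split; try lra; nra).
  assert (e2 : /(b*(b-1)) - /(b*d) = (d - b + 1)/(b*(b-1)*d)) by (field; repeat split; try lra; nra).
  destruct (Rle_or_lt S (2*b)) as [hS|hS].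
  - assert (h3 : /(4*b*b) <= /(b*(2*S))) by (apply Rinv_le_contravar; nra).
    assert (h4 : 0 <= (d - b + 1)/(b*(b-1)*d)).
    { unfold Rdiv. apply Rmult_le_pos. lra. left; apply Rinv_0_lt_compat.
      apply Rmult_lt_0_compat; [|lra]. apply Rmult_lt_0_compat; lra. }
    lra.
  - assert (h4 : /(4*b*b) <= (d - b + 1)/(b*(b-1)*d)).
    { assert (0 < b*(b-1)*d) by (apply Rmult_lt_0_compat; [|lra]; apply Rmult_lt_0_compat; lra).
      apply (Rmult_le_reg_r (4*b*b * (b*(b-1)*d))). apply Rmult_lt_0_compat; [|assumption]. apply Rmult_lt_0_compat; lra.
      replace (/ (4 * b * b) * (4 * b * b * (b * (b - 1) * d))) with (b*(b-1)*d) by (field; repeat split; try lra; nra).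
      replace ((d - b + 1) / (b * (b - 1) * d) * (4 * b * b * (b * (b - 1) * d))) with ((d-b+1)*(4*b*b)) by (field; repeat split; try lra; nra).
      nra. }
    assert (0 <= /(b*(2*S))) by (left; apply Rinv_0_lt_compat; nra).
    lra.
Qed.

Section S0.
End S0.

Lemma tau_bd s t m tau i : in_D s t m tau -> (1 <= i <= m)%nat ->
  s i < INR (tau i) <= s i + t i.
Proof. intros H Hi; exact (H i Hi). Qed.

Lemma tau_gt2 s t m tau i
  (hst : forall n, (1 <= n)%nat -> s n >= t n /\ t n >= 2) :
  in_D s t m tau -> (1 <= i <= m)%nat -> 2 < INR (tau i).
Proof. intros H Hi. pose proof (H i Hi). pose proof (hst i (proj1 Hi)). lra. Qed.

Lemma tau_mono s t m tau i
  (hrec : forall n, (1 <= n)%nat -> s (S n) >= s n + t n) :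
  in_D s t m tau -> (1 <= i)%nat -> (S i <= m)%nat -> (tau i < tau (S i))%nat.
Proof.
  intros H h1 h2. pose proof (H i ltac:(lia)). pose proof (H (S i) ltac:(lia)).
  pose proof (hrec i h1). apply INR_lt. lra.
Qed.

Lemma prod_pos s t m tau i
  (hst : forall n, (1 <= n)%nat -> s n >= t n /\ t n >= 2) :
  in_D s t m tau -> (i <= m)%nat -> 0 < prod_digits tau i.
Proof.
  intros H. induction i; intros hi; simpl. lra.
  apply Rmult_lt_0_compat. apply IHi; lia.
  pose proof (tau_gt2 s t m tau (S i) hst H ltac:(lia)). lra.
Qed.

Lemma ps_mono s t m tau i
  (hst : forall n, (1 <= n)%nat -> s n >= t n /\ t n >= 2) :
  in_D s t m tau -> forall m', (i <= m')%nat -> (m' <= m)%nat ->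
  partial_sum tau i <= partial_sum tau m'.
Proof.
  intros H m' hle. induction hle; intros hm. lra.
  simpl. pose proof (prod_pos s t m tau (S m0) hst H hm).
  assert (0 < / prod_digits tau (S m0)) by (apply Rinv_0_lt_compat; exact H0).
  simpl in H1. specialize (IHhle ltac:(lia)). lra.
Qed.

Lemma B_step s t m tau i
  (hst : forall n, (1 <= n)%nat -> s n >= t n /\ t n >= 2)
  (hrec : forall n, (1 <= n)%nat -> s (S n) >= s n + t n) :
  in_D s t m tau -> (1 <= i)%nat -> (S i <= m)%nat ->
  cyl_B tau (S i) <= cyl_B tau i.
Proof.
  intros H h1 h2. destruct i as [|i0]. lia.
  unfold cyl_B. replace (S (S i0) - 1)%nat with (S i0) by lia.
  replace (S i0 - 1)%nat with i0 by lia.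
  simpl partial_sum. simpl prod_digits.
  pose proof (prod_pos s t m tau i0 hst H ltac:(lia)) as hp.
  pose proof (tau_gt2 s t m tau (S i0) hst H ltac:(lia)) as hu.
  pose proof (tau_mono s t m tau (S i0) hrec H ltac:(lia) h2) as hv.
  apply lt_INR in hv.
  set (p := prod_digits tau i0) in *. set (u := INR (tau (S i0))) in *.
  set (v := INR (tau (S (S i0)))) in *.
  assert (e : / (p * u) + / (p * u * (v - 1)) = / (p * (u - 1)) + (u - v) * / (p*u*(u-1)*(v-1)))
    by (field; repeat split; lra).
  rewrite Rplus_assoc, e.
  assert (0 < / (p*u*(u-1)*(v-1))).
  { apply Rinv_0_lt_compat. repeat apply Rmult_lt_0_compat; lra. }
  nra.
Qed.

Lemma B_chain s t m tau k
  (hst : forall n, (1 <= n)%nat -> s n >= t n /\ t n >= 2)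
  (hrec : forall n, (1 <= n)%nat -> s (S n) >= s n + t n) :
  in_D s t m tau -> (1 <= k)%nat -> forall m', (k <= m')%nat -> (m' <= m)%nat ->
  cyl_B tau m' <= cyl_B tau k.
Proof.
  intros H hk m' hle. induction hle; intros hm. lra.
  pose proof (B_step s t m tau m0 hst hrec H ltac:(lia) hm).
  specialize (IHhle ltac:(lia)). lra.
Qed.

Lemma prod_le s t m tau
  (hst : forall n, (1 <= n)%nat -> s n >= t n /\ t n >= 2) :
  in_D s t m tau -> forall i, (i <= m)%nat -> prod_digits tau i <= 2 ^ i * prod_seq s i.
Proof.
  intros H i. induction i; intros hi; simpl. lra.
  pose proof (prod_pos s t m tau i hst H ltac:(lia)).
  pose proof (H (S i) ltac:(lia)). pose proof (hst (S i) ltac:(lia)).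
  specialize (IHi ltac:(lia)).
  replace (2 * 2 ^ i * (prod_seq s i * s (S i))) with ((2 ^ i * prod_seq s i) * (2 * s (S i))) by ring.
  apply Rmult_le_compat; lra.
Qed.

Lemma prod_seq_ge1 (s t : nat -> R)
  (hst : forall n, (1 <= n)%nat -> s n >= t n /\ t n >= 2) : forall i, 1 <= prod_seq s i.
Proof.
  induction i; simpl. lra. pose proof (hst (S i) ltac:(lia)). nra.
Qed.

Lemma prod_seq_mono (s t : nat -> R)
  (hst : forall n, (1 <= n)%nat -> s n >= t n /\ t n >= 2) :
  forall k n, (k <= n)%nat -> prod_seq s k <= prod_seq s n.
Proof.
  intros k n hle. induction hle. lra. simpl.
  pose proof (hst (S m) ltac:(lia)). pose proof (prod_seq_ge1 s t hst m). nra.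
Qed.

Lemma s_mono (s t : nat -> R)
  (hst : forall n, (1 <= n)%nat -> s n >= t n /\ t n >= 2)
  (hrec : forall n, (1 <= n)%nat -> s (S n) >= s n + t n) :
  forall k n, (1 <= k)%nat -> (k <= n)%nat -> s k <= s n.
Proof.
  intros k n hk hle. induction hle. lra.
  pose proof (hst m ltac:(lia)). pose proof (hrec m ltac:(lia)). lra.
Qed.

Lemma prod_agree tau tau' : forall k, (forall i, (1 <= i <= k)%nat -> tau i = tau' i) ->
  prod_digits tau k = prod_digits tau' k /\ partial_sum tau k = partial_sum tau' k.
Proof.
  induction k; intros H; simpl. split; reflexivity.
  destruct IHk as [h1 h2]. intros i hi; apply H; lia.
  rewrite h1, h2, (H (S k) ltac:(lia)). split; reflexivity.
Qed.

Lemma ext_inD s t n sigma j : in_D s t n sigma -> s (S n) < INR j <= s (S n) + t (S n) ->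
  in_D s t (S n) (extend_digits sigma n j).
Proof.
  intros H hj k hk. unfold extend_digits.
  destruct (Nat.eqb_spec k (S n)). subst; exact hj. apply H; lia.
Qed.

Lemma ext_low sigma n j i : (i <= n)%nat -> extend_digits sigma n j i = sigma i.
Proof. intros. unfold extend_digits. destruct (Nat.eqb_spec i (S n)). lia. reflexivity. Qed.

Lemma J_elim s t n sigma x : in_D s t n sigma -> J_set s t n sigma x ->
  exists tau, in_D s t (S n) tau /\ (forall i, (i <= n)%nat -> tau i = sigma i) /\
    cyl_A tau (S n) <= x <= cyl_B tau (S n).
Proof.
  intros H [j [hj hadh]]. exists (extend_digits sigma n j). split.
  apply ext_inD; assumption. split. intros; apply ext_low; assumption.
  apply adh_bounds. exact hadh.
Qed.
Lemma core (s t : nat -> R)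
  (hpos : forall n, (1 <= n)%nat -> 0 < s n /\ 0 < t n)
  (hst : forall n, (1 <= n)%nat -> s n >= t n /\ t n >= 2)
  (hrec : forall n, (1 <= n)%nat -> s (S n) >= s n + t n)
  n k0 tau tau' x y :
  in_D s t (S n) tau -> in_D s t (S n) tau' -> (S k0 <= n)%nat ->
  (forall i, (1 <= i <= k0)%nat -> tau i = tau' i) ->
  (tau (S k0) < tau' (S k0))%nat ->
  cyl_A tau (S n) <= x -> y <= cyl_B tau' (S n) -> y + eps_n s n <= x.
Proof.
  intros H H' hk hag hlt hx hy.
  pose proof (ps_mono s t (S n) tau (S (S k0)) hst H (S n) ltac:(lia) ltac:(lia)) as hx2.
  pose proof (B_chain s t (S n) tau' (S (S k0)) hst hrec H' ltac:(lia) (S n) ltac:(lia) ltac:(lia)) as hy2.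
  unfold cyl_A in hx. unfold cyl_B in hy2 at 2.
  replace (S (S k0) - 1)%nat with (S k0) in hy2 by lia.
  simpl partial_sum in hx, hx2, hy2. simpl prod_digits in hx, hx2, hy2.
  destruct (prod_agree tau tau' k0 hag) as [eQ eP].
  rewrite <- eQ, <- eP in hy2.
  pose proof (prod_pos s t (S n) tau k0 hst H ltac:(lia)) as hQ.
  pose proof (prod_le s t (S n) tau hst H k0 ltac:(lia)) as hQ2.
  set (Q := prod_digits tau k0) in *. set (P := partial_sum tau k0) in *.
  pose proof (tau_gt2 s t (S n) tau (S k0) hst H ltac:(lia)) as ha.
  assert (hab : INR (tau (S k0)) <= INR (tau' (S k0)) - 1).
  { apply (proj1 (Nat.le_succ_l _ _)) in hlt. apply le_INR in hlt. rewrite S_INR in hlt. lra. }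
  pose proof (H (S (S k0)) ltac:(lia)) as hc.
  pose proof (H' (S (S k0)) ltac:(lia)) as hc'.
  pose proof (H' (S k0) ltac:(lia)) as hb.
  pose proof (hst (S (S k0)) ltac:(lia)) as hstc.
  pose proof (hpos (S (S k0)) ltac:(lia)) as hposc.
  pose proof (hrec (S k0) ltac:(lia)) as hrk.
  pose proof (tau_mono s t (S n) tau' (S k0) hrec H' ltac:(lia) ltac:(lia)) as hbc.
  apply (proj1 (Nat.le_succ_l _ _)) in hbc. apply le_INR in hbc. rewrite S_INR in hbc.
  set (a := INR (tau (S k0))) in *. set (b := INR (tau' (S k0))) in *.
  set (c := INR (tau (S (S k0)))) in *. set (c' := INR (tau' (S (S k0)))) in *.
  set (S0 := s (S (S k0))) in *.
  pose proof (gap_ineq a b c (c' - 1) S0 ha hab ltac:(lra) ltac:(lra) ltac:(lra) ltac:(lra) ltac:(lra) ltac:(lra)) as G.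
  assert (e : / (Q * a) + / (Q * a * c) - (/ (Q * b) + / (Q * b * (c' - 1)))
             = / Q * (/ a - / b + / (a * c) - / (b * (c' - 1)))).
  { field. repeat split; lra. }
  assert (hQi : 0 < / Q) by (apply Rinv_0_lt_compat; lra).
  assert (hgap : / Q * / (4 * b * b) <= x - y).
  { assert (/ Q * / (4 * b * b) <= / Q * (/ a - / b + / (a * c) - / (b * (c' - 1)))) by
      (apply Rmult_le_compat_l; lra).
    lra. }
  rewrite <- Rinv_mult in hgap.
  assert (heps : eps_n s n <= / (Q * (4 * b * b))).
  { unfold eps_n. rewrite <- Rinv_mult.
    apply Rinv_le_contravar. apply Rmult_lt_0_compat. lra. nra.
    pose proof (hst (S k0) ltac:(lia)) as hsk.
    assert (hb2 : b <= 2 * s (S k0)) by lra.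
    assert (h1 : Q * (4 * b * b) <= (2 ^ k0 * prod_seq s k0) * (4 * (2 * s (S k0)) * (2 * s (S k0)))).
    { apply Rmult_le_compat; try lra. nra. apply Rmult_le_compat; nra. }
    assert (h2 : (2 ^ k0 * prod_seq s k0) * (4 * (2 * s (S k0)) * (2 * s (S k0)))
                 = 2 ^ (S k0 + 3) * (prod_seq s (S k0) * s (S k0))).
    { simpl prod_seq. rewrite pow_add. simpl pow. ring. }
    pose proof (Rle_pow 2 (S k0 + 3) (n + 3) ltac:(lra) ltac:(lia)) as h3.
    pose proof (prod_seq_mono s t hst (S k0) n hk) as h4.
    pose proof (s_mono s t hst hrec (S k0) n ltac:(lia) hk) as h5.
    pose proof (prod_seq_ge1 s t hst (S k0)) as h6.
    assert (h7 : 2 ^ (S k0 + 3) * (prod_seq s (S k0) * s (S k0)) <= 2 ^ (n + 3) * (prod_seq s n * s n)).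
    { apply Rmult_le_compat. left; apply pow_lt; lra. nra. exact h3.
      apply Rmult_le_compat; lra. }
    lra. }
  lra.
Qed.
Lemma first_diff (f g : nat -> nat) : forall N,
  (forall i, (1 <= i <= N)%nat -> f i = g i) \/
  exists k0, (S k0 <= N)%nat /\ (forall i, (1 <= i <= k0)%nat -> f i = g i) /\ f (S k0) <> g (S k0).
Proof.
  induction N.
  - left. intros; lia.
  - destruct IHN as [h|[k0 [h1 [h2 h3]]]].
    + destruct (Nat.eq_dec (f (S N)) (g (S N))) as [e|e].
      * left. intros i hi. destruct (Nat.eq_dec i (S N)). subst; exact e. apply h; lia.
      * right. exists N. split. lia. split; assumption.
    + right. exists k0. split. lia. split; assumption.
Qed.

Lemma both_sides (s t : nat -> R)
  (hpos : forall n, (1 <= n)%nat -> 0 < s n /\ 0 < t n)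
  (hst : forall n, (1 <= n)%nat -> s n >= t n /\ t n >= 2)
  (hrec : forall n, (1 <= n)%nat -> s (S n) >= s n + t n)
  (n : nat) (sigma sigma' : nat -> nat)
  (hD : in_D s t n sigma) (hD' : in_D s t n sigma')
  (hneq : exists k, (1 <= k <= n)%nat /\ sigma k <> sigma' k) x y :
  J_set s t n sigma x -> J_set s t n sigma' y ->
  y + eps_n s n <= x \/ x + eps_n s n <= y.
Proof.
  intros Jx Jy.
  destruct (J_elim s t n sigma x hD Jx) as [tau [H [hs [hx1 hx2]]]].
  destruct (J_elim s t n sigma' y hD' Jy) as [tau' [H' [hs' [hy1 hy2]]]].
  destruct (first_diff sigma sigma' n) as [h|[k0 [h1 [h2 h3]]]].
  - destruct hneq as [k [hk hk']]. exfalso; apply hk', h, hk.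
  - assert (hag : forall i, (1 <= i <= k0)%nat -> tau i = tau' i).
    { intros i hi. rewrite hs, hs' by lia. apply h2; exact hi. }
    rewrite <- (hs (S k0)), <- (hs' (S k0)) in h3 by lia.
    destruct (Nat.lt_total (tau (S k0)) (tau' (S k0))) as [hl|[he|hl]].
    + left. apply (core s t hpos hst hrec n k0 tau tau' x y H H' h1 hag hl); assumption.
    + contradiction.
    + right. apply (core s t hpos hst hrec n k0 tau' tau y x H' H h1); try assumption.
      intros i hi; symmetry; apply hag; exact hi.
Qed.

Theorem mainTheorem3 (s t : nat -> R)
  (hpos : forall n, (1 <= n)%nat -> 0 < s n /\ 0 < t n)
  (hst : forall n, (1 <= n)%nat -> s n >= t n /\ t n >= 2)
  (hrec : forall n, (1 <= n)%nat -> s (S n) >= s n + t n)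
  (n : nat) (hn : (1 <= n)%nat) (sigma sigma' : nat -> nat)
  (hD : in_D s t n sigma) (hD' : in_D s t n sigma')
  (hneq : exists k, (1 <= k <= n)%nat /\ sigma k <> sigma' k) :
  (forall x, ~ (J_set s t n sigma x /\ J_set s t n sigma' x)) /\
  (forall x y, J_set s t n sigma x -> J_set s t n sigma' y ->
     eps_n s n <= Rabs (x - y)).
Proof.
  assert (he : 0 < eps_n s n).
  { unfold eps_n. apply Rmult_lt_0_compat; apply Rinv_0_lt_compat.
    apply pow_lt; lra.
    pose proof (prod_seq_ge1 s t hst n). pose proof (hpos n hn). nra. }
  split.
  - intros x [Jx Jx'].
    destruct (both_sides s t hpos hst hrec n sigma sigma' hD hD' hneq x x Jx Jx'); lra.
  - intros x y Jx Jy.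
    destruct (both_sides s t hpos hst hrec n sigma sigma' hD hD' hneq x y Jx Jy);
    unfold Rabs; destruct (Rcase_abs (x - y)); lra.
Qed.
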